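(* Let $A\in\mathbb{R}^{m\times n}$ with $m\ge n$ and with nonzero rows $a_1^\top,\dots,a_m^\top$, let $x\in\mathbb{R}^n$ and set $b:=Ax\in\mathbb{R}^m$ (so $x$ solves the consistent system $Ax=b$). Fix $\beta\in[0,1)$, $M\in[0,1]$ and $l\in\{1,\dots,n\}$. Let $\sigma_l$ be the $l$-th largest singular value of $A$ and $v_l$ an associated right singular vector. Given $x_0\in\mathbb{R}^n$ and $y_0=0\in\mathbb{R}^n$, define for $k=0,1,2,\dots$ $$x_{k+1}=x_k+\frac{b_{i_k}-\langle x_k,a_{i_k}\rangle}{\|a_{i_k}\|_2^2}a_{i_k}+My_k,\qquad y_{k+1}=\beta y_k+(1-\beta)(x_{k+1}-x_k),$$ where the indices $i_0,i_1,\dots$ are chosen independently, each equal to $i\in\{1,\dots,m\}$ with probability $\|a_i\|_2^2/\|A\|_F^2$. Set $$r:=1-\frac{\sigma_l^2}{\|A\|_F^2}+M(1-\beta),\qquad \zeta:=M(1-\beta)^2.$$ Then for all $k\ge 0$, $$\mathbb{E}\langle x_{k+1}-x,v_l\rangle=\begin{bmatrix} r\\ \zeta\end{bmatrix}^\top\begin{bmatrix} r&\zeta\\ -1&\beta\end{bmatrix}^k\begin{bmatrix}1\\ \frac{-1}{1-\beta}\end{bmatrix}\langle x_0-x,v_l\rangle .$$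
   Context: $\|\cdot\|_2$ is the Euclidean norm, $\langle\cdot,\cdot\rangle$ the standard inner product, $\|A\|_F$ the Frobenius norm, $b_i$ the $i$-th entry of $b$. The expectation is over the random indices $i_0,\dots,i_k$. The iteration above is called randomized Kaczmarz with geometrically smoothed momentum (KGSM). *)

(* Defs.v *)
From HB Require Import structures.
From mathcomp Require Import all_boot all_order all_algebra.
From mathcomp Require Import reals.
Set Implicit Arguments. Unset Strict Implicit. Unset Printing Implicit Defensive.
Import Order.TTheory GRing.Theory Num.Theory.
Local Open Scope ring_scope.

Section KGSM.
Variable R : realType.

Definition dotv n (u v : 'cV[R]_n) : R := \sum_(j < n) u j 0 * v j 0.

Definition frob2 m n (A : 'M[R]_(m, n)) : R := \sum_(i < m) \sum_(j < n) A i j ^+ 2.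

Definition arow m n (A : 'M[R]_(m, n)) (i : 'I_m) : 'cV[R]_n := (row i A)^T.

Definition kprob m n (A : 'M[R]_(m, n)) (i : 'I_m) : R :=
  dotv (arow A i) (arow A i) / frob2 A.

Definition rect_diag m n (s : 'I_n -> R) : 'M[R]_(m, n) :=
  \matrix_(i < m, j < n) (if val i == val j then s j else 0).

Definition is_svd m n (A : 'M[R]_(m, n)) (U : 'M[R]_m) (s : 'I_n -> R)
  (V : 'M[R]_n) : Prop :=
  [/\ U^T *m U = 1%:M, V^T *m V = 1%:M,
      (forall j, 0 <= s j),
      (forall j k : 'I_n, (j <= k)%N -> s k <= s j) &
      A = U *m rect_diag m s *m V^T].

Definition kgsm_step m n (A : 'M[R]_(m, n)) (b : 'cV[R]_m) (M beta : R)
  (st : 'cV[R]_n * 'cV[R]_n) (i : 'I_m) : 'cV[R]_n * 'cV[R]_n :=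
  let: (xk, yk) := st in
  let a := arow A i in
  let xk1 := xk + ((b i 0 - dotv xk a) / dotv a a) *: a + M *: yk in
  (xk1, beta *: yk + (1 - beta) *: (xk1 - xk)).

Definition kgsm_run m n (A : 'M[R]_(m, n)) (b : 'cV[R]_m) (M beta : R)
  (x0 : 'cV[R]_n) (s : seq 'I_m) : 'cV[R]_n * 'cV[R]_n :=
  foldl (kgsm_step A b M beta) (x0, 0) s.

Definition kexp m n (A : 'M[R]_(m, n)) (k : nat) (f : seq 'I_m -> R) : R :=
  \sum_(t : k.-tuple 'I_m) (\prod_(i <- t) kprob A i) * f t.

Definition mx2 (a b c d : R) : 'M[R]_2 :=
  \matrix_(i < 2, j < 2)
    (if val i == 0%N then (if val j == 0%N then a else b)
     else (if val j == 0%N then c else d)).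

Definition rv2 (a b : R) : 'rV[R]_2 := \row_(j < 2) (if val j == 0%N then a else b).
Definition cv2 (a b : R) : 'cV[R]_2 := \col_(i < 2) (if val i == 0%N then a else b).

End KGSM.

(* Main.v *)
Require Import Defs.
From HB Require Import structures.
From mathcomp Require Import all_boot all_order all_algebra.
From mathcomp Require Import reals ring lra.
Import Order.TTheory GRing.Theory Num.Theory.
Local Open Scope ring_scope.

Lemma sum_tuple_rcons (R : realType) (T : finType) k (F : k.+1.-tuple T -> R) :
  \sum_(t : k.+1.-tuple T) F t =
  \sum_(t : k.-tuple T) \sum_(j : T) F [tuple of rcons t j].
Proof.
rewrite pair_big /=.
pose h (p : k.-tuple T * T) : k.+1.-tuple T := [tuple of rcons p.1 p.2].
pose g (t : k.+1.-tuple T) : k.-tuple T * T :=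
  ([tuple of belast (thead t) (behead_tuple t)], last (thead t) (behead_tuple t)).
have Et (t : k.+1.-tuple T) : tval t = thead t :: behead t.
  by rewrite [in LHS](tuple_eta t).
rewrite (reindex h) /=; first by apply: eq_bigr => -[].
exists g => [[t j] _|t _].
  have E := Et (h (t, j)); rewrite lastI /= in E.
  move/rcons_inj: E => [E1 E2].
  by congr pair; [apply/val_inj; rewrite /= -E1 | rewrite /= -E2].
by apply/val_inj; rewrite /= -lastI -Et.
Qed.

Section Aux.
Variable R : realType.

Lemma dotvDl n (u u' w : 'cV[R]_n) : dotv (u + u') w = dotv u w + dotv u' w.
Proof. by rewrite /dotv -big_split; apply: eq_bigr => j _; rewrite mxE mulrDl. Qed.

Lemma dotvZl n a (u w : 'cV[R]_n) : dotv (a *: u) w = a * dotv u w.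
Proof. by rewrite /dotv mulr_sumr; apply: eq_bigr => j _; rewrite mxE mulrA. Qed.

Lemma dotvNl n (u w : 'cV[R]_n) : dotv (- u) w = - dotv u w.
Proof. by rewrite /dotv -sumrN; apply: eq_bigr => j _; rewrite mxE mulNr. Qed.

Lemma dotvBl n (u u' w : 'cV[R]_n) : dotv (u - u') w = dotv u w - dotv u' w.
Proof. by rewrite dotvDl dotvNl. Qed.

Lemma dotv0l n (w : 'cV[R]_n) : dotv 0 w = 0.
Proof. by rewrite /dotv big1 // => j _; rewrite mxE mul0r. Qed.

Lemma dotv_mx n (u w : 'cV[R]_n) : dotv u w = (u^T *m w) 0 0.
Proof. by rewrite mxE; apply: eq_bigr => j _; rewrite mxE. Qed.

Lemma dotv_arow m n (A : 'M[R]_(m, n)) (e : 'cV[R]_n) i :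
  dotv e (arow A i) = (A *m e) i 0.
Proof. by rewrite /dotv mxE; apply: eq_bigr => j _; rewrite !mxE mulrC. Qed.

Lemma dotv_arowl m n (A : 'M[R]_(m, n)) (e : 'cV[R]_n) i :
  dotv (arow A i) e = (A *m e) i 0.
Proof. by rewrite /dotv mxE; apply: eq_bigr => j _; rewrite !mxE. Qed.

Lemma key_sum m n (A : 'M[R]_(m, n)) (e w : 'cV[R]_n) :
  \sum_j dotv e (arow A j) * dotv (arow A j) w = dotv e (A^T *m (A *m w)).
Proof.
rewrite dotv_mx mulmxA -trmx_mul [in RHS]mxE; apply: eq_bigr => j _.
by rewrite dotv_arow dotv_arowl [_^T 0 j]mxE.
Qed.

Lemma svd_AtA m n (A : 'M[R]_(m, n)) U s V (l : 'I_n) :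
  (n <= m)%N -> is_svd A U s V ->
  A^T *m (A *m col l V) = s l ^+ 2 *: col l V.
Proof.
move=> Hnm [HU HV _ _ ->].
set S := rect_diag m s.
rewrite !trmx_mul !trmxK colE.
have -> : V *m (S^T *m U^T) *m (U *m S *m V^T *m (V *m (delta_mx l 0 : 'cV[R]_n)))
   = V *m ((S^T *m S) *m (delta_mx l 0 : 'cV[R]_n)).
  rewrite !mulmxA -(mulmxA _ U^T U) HU mulmx1 -(mulmxA _ V^T V) HV mulmx1.
  by rewrite ?mulmxA.
rewrite scalemxAr; congr (_ *m _).
apply/matrixP => j z; rewrite ord1 !mxE (bigD1 l) //= big1; last first.
  by move=> k /negPf Hk; rewrite !mxE Hk /= mulr0.
rewrite !mxE eqxx /= mulr1 addr0.
pose i0 := widen_ord Hnm l.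
rewrite (bigD1 i0) //= big1; last first.
  move=> i Hi; rewrite !mxE.
  have -> : (val i == val l) = false.
    by apply/negbTE; apply: contra Hi => /eqP H; apply/eqP/val_inj.
  by rewrite mulr0.
rewrite !mxE /= eqxx addr0.
case: (eqVneq j l) => [->|Hjl]; first by rewrite eqxx mulr1 expr2.
have -> : (val l == val j) = false.
  by apply/negbTE; apply: contra Hjl => /eqP H; apply/eqP/val_inj.
by rewrite mul0r mulr0.
Qed.


Lemma dotvZr n a (u w : 'cV[R]_n) : dotv u (a *: w) = a * dotv u w.
Proof. by rewrite /dotv mulr_sumr; apply: eq_bigr => j _; rewrite mxE mulrCA. Qed.

Lemma eq_kexp m n (A : 'M[R]_(m, n)) k (f g : seq 'I_m -> R) :
  (forall s, f s = g s) -> kexp A k f = kexp A k g.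
Proof. by move=> H; apply: eq_bigr => t _; rewrite H. Qed.

Lemma kexp_lin m n (A : 'M[R]_(m, n)) k (f g : seq 'I_m -> R) a c :
  kexp A k (fun t => a * f t + c * g t) = a * kexp A k f + c * kexp A k g.
Proof.
rewrite /kexp !mulr_sumr -big_split; apply: eq_bigr => t _ /=.
by rewrite mulrDr !mulrA ![_ * (\prod_(i <- _) _)]mulrC.
Qed.

Lemma kexp0 m n (A : 'M[R]_(m, n)) (f : seq 'I_m -> R) : kexp A 0 f = f [::].
Proof.
rewrite /kexp (eq_bigr (fun _ => f [::])); last first.
  by move=> t _; rewrite (tuple0 t) big_nil mul1r.
by rewrite sumr_const card_tuple expn0.
Qed.

Lemma kexp_run m n (A : 'M[R]_(m, n)) b M beta x0 k
  (F : 'cV[R]_n * 'cV[R]_n -> R) :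
  kexp A k.+1 (fun t => F (kgsm_run A b M beta x0 t)) =
  kexp A k (fun t => \sum_j kprob A j * F (kgsm_step A b M beta (kgsm_run A b M beta x0 t) j)).
Proof.
rewrite /kexp sum_tuple_rcons; apply: eq_bigr => t _.
rewrite mulr_sumr; apply: eq_bigr => j _.
by rewrite /= big_rcons /kgsm_run foldl_rcons mulrA.
Qed.

Lemma mx2_CH (a b c d : R) :
  mx2 a b c d * mx2 a b c d = (a + d) *: mx2 a b c d - (a * d - b * c) *: 1.
Proof.
apply/matrixP => i j; rewrite !mxE !big_ord_recl big_ord0 /= !mxE /=.
by case: i => [[|[|?]] ?] //=; case: j => [[|[|?]] ?] //=; ring.
Qed.

Lemma rv2_cv2 (a b c d : R) : (rv2 a b *m cv2 c d) 0 0 = a * c + b * d.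
Proof. by rewrite !mxE !big_ord_recl big_ord0 /= !mxE /= addr0. Qed.

Lemma rv2_mx2 (a b p q u w : R) :
  rv2 a b *m mx2 p q u w = rv2 (a * p + b * u) (a * q + b * w).
Proof.
apply/matrixP => i j; rewrite !mxE !big_ord_recl big_ord0 /= !mxE /=.
by case: j => [[|[|?]] ?] //=; rewrite addr0.
Qed.

Lemma entryB p q' (X Y : 'M[R]_(p, q')) i j : (X - Y) i j = X i j - Y i j.
Proof. by rewrite !mxE. Qed.
Lemma entryZ p q' a (X : 'M[R]_(p, q')) i j : (a *: X) i j = a * X i j.
Proof. by rewrite !mxE. Qed.

Lemma bil_lin (u : 'rV[R]_2) (w : 'cV[R]_2) a d (X Y : 'M[R]_2) :
  (u *m (a *: X - d *: Y) *m w) 0 0 = a * (u *m X *m w) 0 0 - d * (u *m Y *m w) 0 0.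
Proof.
rewrite mulmxBr mulmxBl -!scalemxAr -!scalemxAl.
by rewrite entryB !entryZ.
Qed.

End Aux.

Theorem theorem1p1 (R : realType) (m n : nat) (A : 'M[R]_(m, n))
  (x : 'cV[R]_n) (beta M : R) (l : 'I_n)
  (U : 'M[R]_m) (s : 'I_n -> R) (V : 'M[R]_n) (x0 : 'cV[R]_n) (k : nat) :
  (n <= m)%N ->
  (forall i : 'I_m, row i A != 0) ->
  0 <= beta -> beta < 1 -> 0 <= M -> M <= 1 ->
  is_svd A U s V ->
  let b := A *m x in
  let sigma := s l in
  let v := col l V in
  let r := 1 - sigma ^+ 2 / frob2 A + M * (1 - beta) in
  let zeta := M * (1 - beta) ^+ 2 in
  kexp A k.+1 (fun t => dotv ((kgsm_run A b M beta x0 t).1 - x) v)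
  = (rv2 r zeta *m (mx2 r zeta (-1) beta) ^+ k *m cv2 1 (- 1 / (1 - beta))) 0 0
    * dotv (x0 - x) v.
Proof.
move=> Hnm Hrow Hb0 Hb1 HM0 HM1 Hsvd b sigma v r zeta.
have Hb1' : 1 - beta != 0 by rewrite subr_eq0 eq_sym lt_eqF.
pose i0 := widen_ord Hnm l.
have Haa i : dotv (arow A i) (arow A i) != 0.
  apply/negP => /eqP H0; move/negP: (Hrow i); apply; apply/eqP/matrixP => z j.
  rewrite ord1 !mxE.
  have H1 : forall q, predT q -> 0 <= arow A i q 0 * arow A i q 0.
    by move=> q _; rewrite -expr2 sqr_ge0.
  have := @psumr_eq0P _ _ _ _ H1 H0 j isT.
  by rewrite !mxE => /eqP; rewrite mulf_eq0 orbb => /eqP ->.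
have HFe : frob2 A = \sum_i dotv (arow A i) (arow A i).
  by apply: eq_bigr => i _; apply: eq_bigr => j _; rewrite !mxE expr2.
have HF : frob2 A != 0.
  apply/negP => /eqP H0; move/negP: (Haa i0); apply; apply/eqP.
  move: H0; rewrite HFe => H0; apply: (psumr_eq0P _ H0) => // q _.
  by rewrite /dotv sumr_ge0 // => j _; rewrite -expr2 sqr_ge0.
have Hsum1 : \sum_i kprob A i = 1.
  by rewrite /kprob -mulr_suml -HFe divff.
set c := 1 - sigma ^+ 2 / frob2 A.
have HAtA : A^T *m (A *m v) = sigma ^+ 2 *: v.
  by rewrite /v /sigma (@svd_AtA _ _ _ _ _ _ _ l Hnm Hsvd).
pose F1 (st : 'cV[R]_n * 'cV[R]_n) := dotv (st.1 - x) v.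
pose F2 (st : 'cV[R]_n * 'cV[R]_n) := dotv st.2 v.
have S1 st : \sum_j kprob A j * F1 (kgsm_step A b M beta st j)
    = c * F1 st + M * F2 st.
  case: st => xk yk; rewrite /F1 /F2 /=.
  have Ht j : kprob A j * dotv (xk + (b j 0 - dotv xk (arow A j))
        / dotv (arow A j) (arow A j) *: arow A j + M *: yk - x) v
      = kprob A j * (dotv (xk - x) v + M * dotv yk v)
        - (dotv (xk - x) (arow A j) * dotv (arow A j) v) / frob2 A.
    rewrite !dotvBl !dotvDl !dotvZl /b -dotv_arow /kprob.
    by field; apply/andP; split.
  rewrite (eq_bigr _ (fun j _ => Ht j)) sumrB -mulr_suml Hsum1 mul1r.
  rewrite -mulr_suml key_sum HAtA dotvZr /c; field.
  by [].
have S2 st : \sum_j kprob A j * F2 (kgsm_step A b M beta st j)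
    = beta * F2 st + (1 - beta) * ((c - 1) * F1 st + M * F2 st).
  have Ht j : F2 (kgsm_step A b M beta st j) =
      beta * F2 st + (1 - beta) * (F1 (kgsm_step A b M beta st j) - F1 st).
    case: st => xk yk; rewrite /F1 /F2.
    have -> : (kgsm_step A b M beta (xk, yk) j).2 = beta *: yk + (1 - beta) *:
       ((kgsm_step A b M beta (xk, yk) j).1 - xk) by [].
    rewrite (@dotvDl _ _ (beta *: yk)) !dotvZl /=; congr (_ + _ * _).
    by rewrite -dotvBl opprB addrA subrK.
  rewrite (eq_bigr _ (fun j _ => congr1 (fun z => kprob A j * z) (Ht j))).
  have lin (p f : 'I_m -> R) a c' d : \sum_j p j * (a + c' * (f j - d)) =
      (\sum_j p j) * (a - c' * d) + c' * \sum_j p j * f j.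
    by rewrite big_distrl big_distrr -big_split; apply: eq_bigr => j _ /=; ring.
  rewrite (lin (kprob A) (fun j => F1 (kgsm_step A b M beta st j))).
  by rewrite Hsum1 S1; ring.
pose E1 j := kexp A j (fun t => F1 (kgsm_run A b M beta x0 t)).
pose E2 j := kexp A j (fun t => F2 (kgsm_run A b M beta x0 t)).
have R1 j : E1 j.+1 = c * E1 j + M * E2 j.
  by rewrite /E1 /E2 kexp_run -kexp_lin; apply: eq_kexp => t; rewrite S1.
have R2 j : E2 j.+1 = beta * E2 j + (1 - beta) * ((c - 1) * E1 j + M * E2 j).
  rewrite /E1 /E2 kexp_run.
  have -> : forall a1 a2 : R, beta * a2 + (1 - beta) * ((c - 1) * a1 + M * a2) =
     ((1 - beta) * (c - 1)) * a1 + (beta + (1 - beta) * M) * a2.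
    by move=> a1 a2; ring.
  by rewrite -kexp_lin; apply: eq_kexp => t; rewrite S2; ring.
set u0 := dotv (x0 - x) v.
have E10 : E1 0 = u0 by rewrite /E1 kexp0.
have E20 : E2 0 = 0 by rewrite /E2 kexp0 /F2 /= dotv0l.
pose T := mx2 r zeta (-1) beta.
pose q := cv2 1 (- 1 / (1 - beta)).
pose G j := (rv2 r zeta *m T ^+ j *m q) 0 0.
have GS j : G j.+2 = (r + beta) * G j.+1 - (r * beta - zeta * (-1)) * G j.
  rewrite /G [T ^+ j.+2]exprSr exprSr -mulrA mx2_CH.
  by rewrite mulrBr -!scalerAr mulr1 bil_lin.
have G0 : G 0 = r * 1 + zeta * (- 1 / (1 - beta)).
  by rewrite /G expr0 mulmx1 rv2_cv2.
have G1 : G 1 = (r * r + zeta * (-1)) * 1 + (r * zeta + zeta * beta) * (- 1 / (1 - beta)).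
  by rewrite /G expr1 rv2_mx2 rv2_cv2.
have ES j : E1 j.+2 = (r + beta) * E1 j.+1 - (r * beta - zeta * (-1)) * E1 j.
  rewrite (R1 j.+1) (R2 j) (R1 j) /r /zeta /c; ring.
suff H : forall j, E1 j.+1 = G j * u0 /\ E1 j.+2 = G j.+1 * u0 by exact: (H k).1.
elim => [|j [IH1 IH2]]; last by split => //; rewrite ES GS IH1 IH2; ring.
rewrite (R1 1) (R2 0) (R1 0) E10 E20 G0 G1 /r /zeta /c.
by split; field; rewrite Hb1' HF.
Qed.
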